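(* Let $\mathcal{X}$ be a finite set and $\underline{Q}$ a lower transition rate operator on $\mathcal{L}(\mathcal{X})$. Then for any $t>0$: $\underline{Q}$ is ergodic if and only if $\underline{T}_t$ is regularly absorbing.
   Context: $\mathcal{L}(\mathcal{X})$ is the set of real-valued functions on $\mathcal{X}$ with pointwise operations and order, real constants identified with constant functions, $\mathbb{I}_A$ the indicator of $A\subseteq\mathcal{X}$, $\mathbb{I}_x\coloneqq\mathbb{I}_{\{x\}}$. A lower transition rate operator is a map $\underline{Q}\colon\mathcal{L}(\mathcal{X})\to\mathcal{L}(\mathcal{X})$ such that for all $f,g$, $\lambda\ge0$, $\mu\in\mathbb{R}$, $x,y\in\mathcal{X}$: $\underline{Q}(\mu)=0$; $\underline{Q}(f+g)\ge\underline{Q}f+\underline{Q}g$; $\underline{Q}(\lambda f)=\lambda\underline{Q}f$; $x\ne y\Rightarrow\underline{Q}(\mathbb{I}_y)(x)\ge0$. For each $f$, $t\mapsto\underline{T}_tf$ is the unique solution on $[0,\infty)$ of $\frac{d}{dt}\underline{T}_tf=\underline{Q}\,\underline{T}_tf$ with $\underline{T}_0f=f$ (existence and uniqueness are known); $\underline{T}_t$ denotes the operator $f\mapsto\underline{T}_tf$. $\underline{Q}$ is ergodic if for all $f$, $\lim_{t\to\infty}\underline{T}_tf$ exists and is a constant function. For an operator $\underline{T}$ (here $\underline{T}=\underline{T}_t$) let $\overline{T}f\coloneqq-\underline{T}(-f)$ and let powers denote composition. $\underline{T}$ is regularly absorbing if $\mathcal{X}_{\mathrm{RA}}\coloneqq\{x\in\mathcal{X}\colon\exists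 n\in\mathbb{N},\ \min\overline{T}^n\mathbb{I}_x>0\}\neq\emptyset$ and for every $x\in\mathcal{X}\setminus\mathcal{X}_{\mathrm{RA}}$ there is $n\in\mathbb{N}$ with $\underline{T}^n\mathbb{I}_{\mathcal{X}_{\mathrm{RA}}}(x)>0$. *)

(* Defs.v *)
From HB Require Import structures.
From mathcomp Require Import all_boot all_order all_algebra.
From mathcomp Require Import all_classical all_reals all_analysis.
Set Implicit Arguments. Unset Strict Implicit. Unset Printing Implicit Defensive.
Import Order.TTheory GRing.Theory Num.Theory.
Import numFieldNormedType.Exports.
Local Open Scope classical_set_scope.
Local Open Scope ring_scope.

Section Defs.
Variables (R : realType) (X : finType).

Definition indic1 (y : X) : X -> R := fun z => if z == y then 1 else 0.

Definition lower_rate_op (Q : (X -> R) -> (X -> R)) : Prop :=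
  [/\ forall mu : R, Q (fun _ => mu) = (fun _ => 0),
      forall (f g : X -> R) (x : X), Q f x + Q g x <= Q (fun y => f y + g y) x,
      forall (l : R) (f : X -> R), 0 <= l ->
        Q (fun y => l * f y) = (fun y => l * Q f y) &
      forall x y : X, x != y -> 0 <= Q (indic1 y) x].

(* T is the solution of d/dt T_t f = Q T_t f, T_0 f = f on [0,oo):
   at every t >= 0 the derivative is taken within [0,oo)
   (one-sided at t = 0). *)
Definition lower_semigroup (Q : (X -> R) -> (X -> R))
    (T : R -> (X -> R) -> (X -> R)) : Prop :=
  forall f : X -> R, T 0 f = f /\
    forall t : R, 0 <= t -> forall x : X,
      (fun h : R => h^-1 * (T (t + h) f x - T t f x))
        @ within (fun h : R => 0 <= t + h) (0 : R)^' --> Q (T t f) x.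

Definition ergodic (T : R -> (X -> R) -> (X -> R)) : Prop :=
  forall f : X -> R, exists c : R, forall x : X,
    (fun t : R => T t f x) @ +oo --> c.

Definition upper_op (Tl : (X -> R) -> (X -> R)) : (X -> R) -> (X -> R) :=
  fun f x => - Tl (fun y => - f y) x.

Definition in_RA (Tl : (X -> R) -> (X -> R)) (x : X) : Prop :=
  exists n : nat, forall y : X, 0 < iter n (upper_op Tl) (indic1 x) y.

Definition regularly_absorbing (Tl : (X -> R) -> (X -> R)) : Prop :=
  (exists x : X, in_RA Tl x) /\
  forall x : X, ~ in_RA Tl x ->
    exists n : nat,
      0 < iter n Tl (fun y => if `[< in_RA Tl y >] then 1 else 0) x.

End Defs.

(* Main.v *)
Require Import Defs.
From mathcomp Require Import all_boot all_order all_algebra.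
From mathcomp Require Import all_classical all_reals all_analysis.
From mathcomp Require Import ring lra.
Import numFieldNormedType.Exports.
Import Order.TTheory GRing.Theory Num.Theory.
Local Open Scope classical_set_scope.
Local Open Scope ring_scope.
Set Implicit Arguments. Unset Strict Implicit. Unset Printing Implicit Defensive.
Section Op.
Variables (R : realType) (X : finType).
Implicit Types (f g : X -> R) (S : (X -> R) -> (X -> R)).

Definition isLT (S : (X -> R) -> (X -> R)) : Prop :=
  [/\ forall f g x, S f x + S g x <= S (fun y => f y + g y) x,
      forall (l : R) f, 0 <= l -> S (fun y => l * f y) = (fun y => l * S f y),
      forall mu : R, S (fun _ => mu) = (fun _ => mu) &
      forall f g, (forall x, f x <= g x) -> forall x, S f x <= S g x].

Lemma isLT_cadd S f (mu : R) : isLT S -> S (fun y => f y + mu) = (fun y => S f y + mu).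
Proof.
case=> Hs Hh Hc Hm; apply: funext => x; apply/le_anti/andP; split.
  have := Hs (fun y => f y + mu) (fun _ => - mu) x.
  have -> : (fun y => f y + mu + - mu) = f by apply: funext => y; rewrite addrK.
  by rewrite Hc; lra.
have := Hs f (fun _ => mu) x; rewrite Hc; lra.
Qed.

Lemma isLT_id : isLT id.
Proof. by split => //= *; exact: lexx. Qed.

Lemma isLT_comp S1 S2 : isLT S1 -> isLT S2 -> isLT (fun f => S1 (S2 f)).
Proof.
case=> Hs1 Hh1 Hc1 Hm1 [Hs2 Hh2 Hc2 Hm2]; split.
- move=> f g x; apply: le_trans (Hs1 _ _ x) _; apply: Hm1 => y; exact: Hs2.
- by move=> l f l0; rewrite Hh2 // Hh1.
- by move=> mu; rewrite Hc2 Hc1.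
- by move=> f g fg x; apply: Hm1; apply: Hm2.
Qed.

Lemma isLT_iter S n : isLT S -> isLT (iter n S).
Proof.
move=> HS; elim: n => [|n IH] /=; first exact: isLT_id.
exact: isLT_comp.
Qed.

Lemma upper_iter S n : upper_op (iter n S) = iter n (upper_op S).
Proof.
elim: n => [|n IH]; first by apply: funext => f; apply: funext => x; rewrite /upper_op /= opprK.
apply: funext => f; rewrite iterS -IH; apply: funext => x.
rewrite /upper_op /=; congr (- S _ x); apply: funext => y; by rewrite opprK.
Qed.

Section U.
Variable S : (X -> R) -> (X -> R).
Hypothesis HS : isLT S.
Let U := upper_op S.

Lemma U_mono f g : (forall x, f x <= g x) -> forall x, U f x <= U g x.
Proof. case: HS => _ _ _ Hm fg x; rewrite /U /upper_op lerN2; apply: Hm => y; rewrite lerN2; exact: fg. Qed.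

Lemma U_const (mu : R) : U (fun _ => mu) = (fun _ => mu).
Proof. case: HS => _ _ Hc _; apply: funext => x; by rewrite /U /upper_op Hc opprK. Qed.

Lemma U_hom (l : R) f : 0 <= l -> U (fun y => l * f y) = (fun y => l * U f y).
Proof.
case: HS => _ Hh _ _ l0; apply: funext => x; rewrite /U /upper_op.
have -> : (fun y => - (l * f y)) = (fun y => l * - f y) by apply: funext => y; rewrite mulrN.
by rewrite Hh // mulrN.
Qed.

Lemma U_sub f g x : U (fun y => f y + g y) x <= U f x + U g x.
Proof.
case: HS => Hs _ _ _; rewrite /U /upper_op.
have := Hs (fun y => - f y) (fun y => - g y) x.
have -> : (fun y => - f y + - g y) = (fun y => - (f y + g y)) by apply: funext => y; rewrite opprD.
lra.
Qed.

Lemma U_sumseq (I : Type) (s : seq I) (F : I -> X -> R) x :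
  U (fun w => \sum_(i <- s) F i w) x <= \sum_(i <- s) U (F i) x.
Proof.
elim: s => [|a s IH].
  have -> : (fun w : X => \sum_(i <- [::]) F i w) = (fun _ => 0) by apply: funext => w; rewrite big_nil.
  by rewrite U_const big_nil.
have -> : (fun w : X => \sum_(i <- a :: s) F i w) = (fun w => F a w + \sum_(i <- s) F i w)
  by apply: funext => w; rewrite big_cons.
rewrite big_cons; apply: le_trans (U_sub (F a) (fun w => \sum_(i <- s) F i w) x) _; exact: lerD.
Qed.

Lemma U_sum g y : (forall z, 0 <= g z) ->
  U g y <= \sum_z g z * U (indic1 R z) y.
Proof.
move=> g0.
have Hg : g = (fun w => \sum_z (fun z w => g z * indic1 R z w) z w).
  apply: funext => w; rewrite (bigD1 w) //= big1 /indic1 ?eqxx ?mulr1 ?addr0 //.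
  by move=> z /negPf; rewrite eq_sym => ->; rewrite mulr0.
rewrite {1}Hg.
apply: le_trans (U_sumseq (index_enum X) (fun z w => g z * indic1 R z w) y) _.
rewrite le_eqVlt; apply/orP; left; apply/eqP; apply: eq_bigr => z _.
by rewrite U_hom.
Qed.

Lemma U_ge0 f : (forall x, 0 <= f x) -> forall x, 0 <= U f x.
Proof. move=> f0 x; have := U_mono (f := fun _ => 0) (g := f) f0 x; by rewrite U_const. Qed.

End U.
End Op.
Section RA.
Variables (R : realType) (X : finType).
Variable S : (X -> R) -> (X -> R).
Hypothesis HS : isLT S.
Let U := upper_op S.
Let r : X -> R := fun y => if `[< in_RA S y >] then 1 else 0.

Lemma iterU_mono n f g : (forall x, f x <= g x) -> forall x, iter n U f x <= iter n U g x.
Proof. rewrite /U -upper_iter; apply: U_mono; exact: isLT_iter. Qed.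

Lemma iterU_hom n (l : R) f : 0 <= l -> iter n U (fun y => l * f y) = (fun y => l * iter n U f y).
Proof. rewrite /U -upper_iter; apply: U_hom; exact: isLT_iter. Qed.

Lemma iterU_const n (mu : R) : iter n U (fun _ => mu) = (fun _ => mu).
Proof. rewrite /U -upper_iter; apply: U_const; exact: isLT_iter. Qed.

Lemma inRA_step y z : in_RA S y -> 0 < U (indic1 R z) y -> in_RA S z.
Proof.
case=> n Hn Hk; exists n.+1 => w; rewrite iterSr.
set k := U (indic1 R z) y.
have H1 : forall v, k * indic1 R y v <= U (indic1 R z) v.
  move=> v; rewrite /indic1; case: eqP => [->|_]; first by rewrite mulr1.
  rewrite mulr0; apply: U_ge0 => // q; rewrite /indic1; by case: eqP.
apply: lt_le_trans (iterU_mono n H1 w).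
rewrite iterU_hom; last exact: ltW.
exact: mulr_gt0.
Qed.

Lemma r_le_Sr y : r y <= S r y.
Proof.
case: HS => Hs Hh Hc Hm.
case: (asboolP (in_RA S y)) => Hy; last first.
  have -> : r y = 0 by rewrite /r; case: asboolP.
  have := Hm (fun _ => 0) r _ y; rewrite Hc; apply => v; rewrite /r; by case: asboolP.
have -> : r y = 1 by rewrite /r; case: asboolP.
pose g : X -> R := fun w => if `[< in_RA S w >] then 0 else 1.
have -> : r = (fun w => (fun v => - g v) w + 1).
  apply: funext => w; rewrite /r /g; case: asboolP => _; lra.
rewrite (isLT_cadd _ _ HS).
have : U g y <= 0.
  apply: le_trans (U_sum HS y _) _; first by move=> z; rewrite /g; case: asboolP.
  apply: sumr_le0 => z _; rewrite /g; case: asboolP => Hz; first by rewrite mul0r.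
  rewrite mul1r; rewrite leNgt; apply/negP => Hp; apply: Hz; exact: inRA_step Hy Hp.
rewrite /U /upper_op; lra.
Qed.

Lemma r_ge0 y : 0 <= r y.
Proof. by rewrite /r; case: asboolP. Qed.

Lemma iter_r_mono k n y : iter n S r y <= iter (k + n) S r y.
Proof.
elim: k n y => [|k IH] n y //.
rewrite addSnnS; apply: le_trans (IH n.+1 y); rewrite iterSr.
case: (isLT_iter n HS) => _ _ _ Hm; apply: Hm => v; exact: r_le_Sr.
Qed.

Lemma iter_r_ge n y : r y <= iter n S r y.
Proof. have := iter_r_mono n 0 y; by rewrite addn0. Qed.

End RA.
Lemma fin_unif (R : realType) (X : finType) (P : X -> Prop) (F : X -> nat -> X -> R) :
  (forall x, P x -> exists N d, 0 < d /\ forall n, (N <= n)%N -> forall y, d <= F x n y) ->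
  exists N d, 0 < d /\ forall x, P x -> forall n, (N <= n)%N -> forall y, d <= F x n y.
Proof.
move=> H.
suff : forall s : seq X, exists N d, 0 < d /\ forall x, x \in s -> P x ->
    forall n, (N <= n)%N -> forall y, d <= F x n y.
  case/(_ (enum X)) => N [d [d0 Hd]]; exists N, d; split => // x Px; apply: Hd => //.
  by rewrite mem_enum.
elim => [|a s [N [d [d0 Hd]]]]; first by exists 0%N, 1; split.
case: (pselect (P a)) => Pa; last first.
  exists N, d; split => // x; rewrite inE => /orP [/eqP -> //|xs]; exact: Hd.
have [N1 [d1 [d10 Hd1]]] := H a Pa.
exists (maxn N N1), (Num.min d d1); split; first by rewrite lt_min d0 d10.
move=> x; rewrite inE => /orP [/eqP -> _|xs Px] n; rewrite geq_max => /andP [h1 h2] y.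
  apply: le_trans (Hd1 n h2 y); by rewrite ge_min lexx orbT.
apply: le_trans (Hd x xs Px n h1 y); by rewrite ge_min lexx.
Qed.

Lemma fin_pos (R : realType) (X : finType) (g : X -> R) :
  (forall y, 0 < g y) -> exists d, 0 < d /\ forall y, d <= g y.
Proof.
move=> Hg.
have [N [d [d0 Hd]]] := @fin_unif R X (fun _ => True) (fun y _ _ => g y)
  (fun y _ => ex_intro _ 0%N (ex_intro _ (g y) (conj (Hg y) (fun n _ _ => lexx _)))).
exists d; split => // y; exact: (Hd y I N (leqnn N) y).
Qed.

Section Suff.
Variables (R : realType) (X : finType) (S : (X -> R) -> (X -> R)).
Hypothesis HS : isLT S.
Let U := upper_op S.
Let r : X -> R := fun y => if `[< in_RA S y >] then 1 else 0.
Hypothesis RA : regularly_absorbing S.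

Lemma suff_contract : exists (M : nat) (e : R), 0 < e /\ e <= 1/2 /\
  forall f (a b : R), (forall x, a <= f x <= b) ->
  exists a' b', a <= a' /\ b' <= b /\ b' - a' <= (1 - e) * (b - a) /\
     forall x, a' <= iter M S f x <= b'.
Proof.
case: RA => [[x0 Hx0] Habs].
have [N1 [d [d0 Hd]]] : exists N d, 0 < d /\ forall x, in_RA S x ->
    forall n, (N <= n)%N -> forall y, d <= iter n U (indic1 R x) y.
  apply: fin_unif => x [n Hn].
  have [d [d0 Hd]] := fin_pos Hn.
  exists n, d; split => // m Hm y; rewrite -(subnK Hm) iterD.
  apply: le_trans (iterU_mono HS (m - n) (f := fun _ => d) Hd y).
  by rewrite iterU_const.
have [N2 [h [h0 Hh]]] : exists N h, 0 < h /\ forall y : X, True ->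
    forall n, (N <= n)%N -> forall z : X, h <= iter n S r y.
  apply: fin_unif => y _; case: (pselect (in_RA S y)) => Hy.
    exists 0%N, 1; split => // n _ _; apply: le_trans (iter_r_ge HS n y).
    by rewrite /r; case: asboolP.
  have [n Hn] := Habs y Hy.
  exists n, (iter n S r y); split => // m Hm _; rewrite -(subnK Hm); exact: iter_r_mono.
set M := maxn N1 N2; set e := Num.min (Num.min d h) 1 / 2.
have e0 : 0 < e by rewrite /e divr_gt0 // !lt_min d0 h0 ltr01.
have ed : e * 2 <= d by rewrite /e mulfVK // !ge_min lexx.
have eh : e * 2 <= h by rewrite /e mulfVK // !ge_min lexx orbT.
have e1 : e * 2 <= 1 by rewrite /e mulfVK // !ge_min lexx !orbT.
exists M, e; split => //; split; first lra.
move=> f a b Hab.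
have ab : a <= b by case/andP: (Hab x0) => h1 h2; exact: le_trans h1 h2.
have HV := isLT_iter M HS.
case: (HV) => Vs Vh Vc Vm.
have lo : forall x, a <= iter M S f x.
  move=> x; have := Vm (fun _ => a) f _ x; rewrite Vc; apply => y; by case/andP: (Hab y).
have hi : forall x, iter M S f x <= b.
  move=> x; have := Vm f (fun _ => b) _ x; rewrite Vc; apply => y; by case/andP: (Hab y).
case: (pselect (exists x, in_RA S x /\ f x <= (a + b) / 2)) => [[x [Hx fx]]|HB].
  exists a, (b - (b - a) * e); split => //; split; first by nra.
  split; first by nra.
  move=> y; rewrite lo /=.
  have H1 : forall w, f w <= (fun w => (b - f x) * - indic1 R x w + b) w.
    move=> w /=; rewrite /indic1; case: eqP => [->|_]; first lra.
    by case/andP: (Hab w) => _ h2; lra.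
  apply: le_trans (Vm _ _ H1 y) _.
  rewrite (isLT_cadd (fun w => (b - f x) * - indic1 R x w) b HV).
  rewrite (Vh (b - f x) (fun w => - indic1 R x w)); last by case/andP: (Hab x) => _ h2; lra.
  have : iter M S (fun w => - indic1 R x w) y = - iter M U (indic1 R x) y.
    by rewrite /U -upper_iter /upper_op opprK.
  move=> ->.
  have Hu := Hd x Hx M (leq_maxl _ _) y.
  nra.
have HB' : forall x, in_RA S x -> (a + b) / 2 < f x.
  move=> x Hx; rewrite ltNge; apply/negP => fx; apply: HB; by exists x.
exists (a + (b - a) * e), b; split; first by nra.
split => //; split; first by nra.
move=> y; rewrite hi andbT.
have H1 : forall w, (fun w => (b - a) / 2 * r w + a) w <= f w.
  move=> w /=; rewrite /r; case: asboolP => Hw.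
    have := HB' w Hw; lra.
  by case/andP: (Hab w) => h1 _; lra.
apply: le_trans (Vm _ _ H1 y).
rewrite (isLT_cadd (fun w => (b - a) / 2 * r w) a HV).
rewrite (Vh ((b - a) / 2) r); last lra.
have Hu := Hh y I M (leq_maxr _ _) y.
nra.
Qed.

End Suff.
Section Nec.
Variables (R : realType) (X : finType) (S : (X -> R) -> (X -> R)).
Hypothesis HS : isLT S.
Hypothesis Xne : (0 < #|X|)%N.
Let U := upper_op S.
Let r : X -> R := fun y => if `[< in_RA S y >] then 1 else 0.
Hypothesis ErgD : forall g : X -> R, exists c : R, forall x,
  iter n S g x @[n --> \oo] --> c.

Lemma nec_RA : regularly_absorbing S.
Proof.
case/card_gt0P: Xne => y0 _.
have [x0 Hx0] : exists x, in_RA S x.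
  case: (pselect (exists x, in_RA S x)) => // Hno; exfalso.
  have Hc : forall z, exists c : R, (c <= 0) /\ forall y,
      iter n U (indic1 R z) y @[n --> \oo] --> c.
    move=> z; have [c Hc] := ErgD (fun w => - indic1 R z w).
    have Hcv : forall y, iter n U (indic1 R z) y @[n --> \oo] --> - c.
      move=> y.
      have -> : (fun n => iter n U (indic1 R z) y) =
                (fun n => - iter n S (fun w => - indic1 R z w) y).
        by apply: funext => n; rewrite /U -upper_iter /upper_op.
      exact: cvgN.
    exists (- c); split => //; rewrite leNgt; apply/negP => cpos.
    have := filter_forall eventually_filter (fun y => cvgr_gt (- c) (Hcv y) 0 cpos).
    move/(_ eventually_filter)/filter_ex => [N HN]; apply: Hno; exists z; exists N => y; exact: HN.
  have /choice [c Hc'] := Hc.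
  set e : R := (#|X|%:R + 1)^-1.
  have e0 : 0 < e by rewrite /e invr_gt0; apply: ltr_wpDl => //; exact: ler0n.
  have Hlt : forall z, c z < c z + e by move=> z; rewrite ltrDl.
  have := filter_forall eventually_filter (fun z => cvgr_lt (c z) ((Hc' z).2 y0) (c z + e) (Hlt z)).
  move/(_ eventually_filter)/filter_ex => [N HNN].
  have H1 : 1 <= \sum_z iter N U (indic1 R z) y0.
    have := U_sum (isLT_iter N HS) y0 (g := fun _ => 1) (fun _ => ler01).
    rewrite U_const; last exact: isLT_iter.
    under eq_bigr do rewrite mul1r.
    by rewrite upper_iter.
  have H2 : \sum_z iter N U (indic1 R z) y0 <= \sum_(z : X) e.
    apply: ler_sum => z _; apply: le_trans (ltW (HNN z)) _.
    have := (Hc' z).1; lra.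
  have H3 : \sum_(z : X) e < 1.
    rewrite sumr_const /e.
    have hX : 0 <= #|X|%:R :> R by exact: ler0n.
    rewrite -[_ *+ _]mulr_natr.
    rewrite ltr_pdivrMl; last lra.
    lra.
  lra.
split; first by exists x0.
move=> y Hy.
have [c Hc] := ErgD r.
have c1 : 1 <= c.
  rewrite leNgt; apply/negP => c1.
  have := cvgr_lt c (Hc x0) 1 c1; move/(_ eventually_filter)/filter_ex => [N HN].
  have Hr1 : 1 <= iter N S r x0.
    apply: le_trans (iter_r_ge HS N x0); by rewrite /r; case: asboolP.
  have := HN; lra.
have c0 : 0 < c by lra.
have := cvgr_gt c (Hc y) 0 c0; move/(_ eventually_filter)/filter_ex => [N HN].
exists N; exact: HN.
Qed.

End Nec.
Lemma nearF (R : realType) (t : R) (P : R -> Prop) :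
  (\forall h \near within (fun h : R => 0 <= t + h) (0 : R)^', P h) ->
  exists2 e : R, 0 < e & forall h, `|h| < e -> h != 0 -> 0 <= t + h -> P h.
Proof.
rewrite /within /prop_near1 /=. move=> H.
have := H. rewrite /dnbhs /within /=. move/nbhs_ballP => [e e0 He].
exists e => // h he h0 th. apply: (He h) => //. rewrite /ball /= sub0r normrN //.
Qed.

Section ODE.
Variables (R : realType) (X : finType).
Variable Q : (X -> R) -> (X -> R).
Hypothesis HQ : lower_rate_op Q.
Implicit Types (f g : X -> R).

Local Notation FF t := (within (fun h : R => 0 <= t + h) (0 : R)^').


Lemma Q_sup f g x : Q f x + Q g x <= Q (fun y => f y + g y) x.
Proof. by case: HQ. Qed.

Lemma Q_hom (l : R) f : 0 <= l -> Q (fun y => l * f y) = (fun y => l * Q f y).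
Proof. by case: HQ => _ _ H _; apply: H. Qed.

Lemma Q_cst (mu : R) x : Q (fun _ => mu) x = 0.
Proof. by case: HQ => H _ _ _; rewrite H. Qed.

Lemma Q_cadd f (mu : R) x : Q (fun y => f y + mu) x = Q f x.
Proof.
apply/le_anti/andP; split.
  have := Q_sup (fun y => f y + mu) (fun _ => - mu) x.
  have -> : (fun y => f y + mu + - mu) = f by apply: funext => y; rewrite addrK.
  by rewrite Q_cst; lra.
have := Q_sup f (fun _ => mu) x; rewrite Q_cst; lra.
Qed.

Lemma Q_diff f g x : Q g x + Q (fun y => f y - g y) x <= Q f x.
Proof.
have := Q_sup g (fun y => f y - g y) x.
by have -> : (fun y => g y + (f y - g y)) = f by apply: funext => y; rewrite addrC subrK.
Qed.

Lemma Q_sumseq (I : Type) (s : seq I) (F : I -> X -> R) x :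
  \sum_(i <- s) Q (F i) x <= Q (fun w => \sum_(i <- s) F i w) x.
Proof.
elim: s => [|a s IH].
  have -> : (fun w : X => \sum_(i <- [::]) F i w) = (fun _ => 0) by apply: funext => w; rewrite big_nil.
  by rewrite Q_cst big_nil.
have -> : (fun w : X => \sum_(i <- a :: s) F i w) = (fun w => F a w + \sum_(i <- s) F i w)
  by apply: funext => w; rewrite big_cons.
rewrite big_cons; apply: le_trans (Q_sup (F a) (fun w => \sum_(i <- s) F i w) x); exact: lerD.
Qed.

Lemma Q_qmono g x : (forall y, 0 <= g y) -> g x = 0 -> 0 <= Q g x.
Proof.
move=> g0 gx.
have Hg : g = (fun w => \sum_z (fun z w => g z * indic1 R z w) z w).
  apply: funext => w; rewrite (bigD1 w) //= big1 /indic1 ?eqxx ?mulr1 ?addr0 //.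
  by move=> z /negPf; rewrite eq_sym => ->; rewrite mulr0.
rewrite Hg; apply: le_trans (Q_sumseq (index_enum X) (fun z w => g z * indic1 R z w) x).
apply: sumr_ge0 => z _; rewrite Q_hom //.
case: (eqVneq z x) => [->|zx]; first by rewrite gx mul0r.
apply: mulr_ge0 => //; case: HQ => _ _ _ H; apply: H; by rewrite eq_sym.
Qed.

Lemma nearF' (t : R) (P : R -> Prop) :
  (exists2 e : R, 0 < e & forall h, `|h| < e -> h != 0 -> 0 <= t + h -> P h) ->
  \forall h \near FF t, P h.
Proof.
move=> [e e0 He].
rewrite /within /prop_near1 /= /dnbhs /within /=.
apply/nbhs_ballP; exists e => // h; rewrite /ball /= sub0r normrN => he hn th.
exact: He.
Qed.

Lemma FF_neq0 t : \forall h \near FF t, h != 0.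
Proof. by apply: nearF'; exists 1. Qed.

Lemma FF_id t : (fun h : R => h) @ FF t --> (0 : R).
Proof.
apply: cvg_within_filter.
apply: cvg_within_filter; exact: cvg_id.
Qed.

Lemma diff_cont (u : R -> R) (t L : R) :
  (fun h => h^-1 * (u (t + h) - u t)) @ FF t --> L ->
  (fun h => u (t + h)) @ FF t --> u t.
Proof.
move=> Hq.
have H1 : (fun h => u t + h * (h^-1 * (u (t + h) - u t))) @ FF t --> u t + 0 * L.
  apply: cvgD; first exact: cvg_cst.
  apply: cvgM => //; exact: FF_id.
rewrite mul0r addr0 in H1.
apply: cvg_trans H1; apply: near_eq_cvg.
apply: filterS (FF_neq0 t) => h hn.
by rewrite mulrA mulfV // mul1r addrC subrK.
Qed.

Definition qd (w : R -> X -> R) (t : R) (x : X) := fun h : R => h^-1 * (w (t + h) x - w t x).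

Lemma KL (w d : R -> X -> R) :
  (forall t, 0 <= t -> forall x, qd w t x @ FF t --> d t x) ->
  (forall t, 0 <= t -> forall x, Q (w t) x <= d t x) ->
  (forall x, 0 <= w 0 x) ->
  forall t, 0 <= t -> forall x, 0 <= w t x.
Proof.
move=> Hd HQd H0 s0 s00 x0.
rewrite leNgt; apply/negP => Hneg.
set eps := - w s0 x0 / (2 * (1 + s0)).
have eps0 : 0 < eps by rewrite /eps divr_gt0 //; lra.
pose v t x := w t x + eps * (1 + t).
have vs0 : v s0 x0 < 0.
  have : eps * (1 + s0) = - w s0 x0 / 2.
    rewrite /eps; field; apply: lt0r_neq0; lra.
  rewrite /v; lra.
have Hdv : forall t, 0 <= t -> forall x, qd v t x @ FF t --> d t x + eps.
  move=> t t0 x; apply: cvg_trans (cvgD (Hd t t0 x) (cvg_cst eps)).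
  apply: near_eq_cvg; apply: filterS (FF_neq0 t) => h hn /=.
  transitivity (h^-1 * (w (t + h) x - w t x) + eps); first by [].
  rewrite /qd /v; field; exact: hn.
have HQv : forall t x, Q (v t) x = Q (w t) x.
  by move=> t x; rewrite /v Q_cadd.
pose S := [set t | 0 <= t /\ exists x, v t x < 0].
have S0 : S s0 by split => //; exists x0.
have hlb : has_lbound S by exists 0 => t [t0 _].
have hinf : has_inf S by split => //; exists s0.
set ts := inf S.
have ts0 : 0 <= ts by apply: lb_le_inf; [exists s0 | move=> t [t0 _]].
have tsS : forall t, S t -> ts <= t by move=> t; exact: (ge_inf hlb).
have A : forall r, 0 <= r -> r < ts -> forall x, 0 <= v r x.
  move=> r r0 rts x; rewrite leNgt; apply/negP => Hr.
  have := tsS r (conj r0 (ex_intro _ x Hr)); lra.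
have Hc : forall t, 0 <= t -> forall x, (fun h => v (t + h) x) @ FF t --> v t x.
  move=> t t0 x; exact: (diff_cont (u := fun s => v s x) (Hdv t t0 x)).
have B : forall x, 0 <= v ts x.
  move=> x; rewrite leNgt; apply/negP => Hx.
  have [ts_eq|ts_pos] : ts = 0 \/ 0 < ts.
    by move: ts0; rewrite le_eqVlt => /orP [/eqP ->|->]; [left|right].
    move: Hx; rewrite ts_eq /v; have := H0 x; lra.
  have [e e0 He] := nearF (cvgr_lt (v ts x) (Hc ts ts0 x) 0 Hx).
  have hm : 0 < Num.min e ts by rewrite lt_min e0 ts_pos.
  have me : Num.min e ts <= e by rewrite ge_min lexx.
  have mt : Num.min e ts <= ts by rewrite ge_min lexx orbT.
  set h := - (Num.min e ts / 2).
  have Hv : v (ts + h) x < 0.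
    apply: He.
    - rewrite /h normrN gtr0_norm; [lra | exact: divr_gt0].
    - rewrite /h oppr_eq0; apply: lt0r_neq0; exact: divr_gt0.
    - rewrite /h; lra.
  have := A (ts + h) _ _ x; rewrite /h; lra.
have C : exists2 e : R, 0 < e & forall h, `|h| < e -> h != 0 -> 0 <= ts + h ->
    forall x, 0 < h -> 0 <= v (ts + h) x.
  apply: nearF.
  apply: filter_forall => x.
  have [vpos|vz] : 0 < v ts x \/ v ts x = 0.
    by move: (B x); rewrite le_eqVlt => /orP [/eqP ->|->]; [right|left].
    apply: filterS (cvgr_gt (v ts x) (Hc ts ts0 x) 0 vpos) => h hh _; exact: ltW.
  have L0 : 0 < d ts x + eps.
    have := HQd ts ts0 x; have : 0 <= Q (w ts) x.
      rewrite -HQv; apply: Q_qmono => //; exact: B.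
    lra.
  apply: filterS (cvgr_gt (d ts x + eps) (Hdv ts ts0 x) 0 L0) => h hq hpos.
  move: hq; rewrite /qd vz subr0 => hq.
  have := mulr_gt0 hpos hq; rewrite mulrA mulfV ?mul1r; first exact: ltW.
  exact: lt0r_neq0.
case: C => e e0 He.
have [t tS tlt] := inf_adherent e0 hinf.
have := tsS t tS; rewrite le_eqVlt => /orP [/eqP tst | tst].
  case: tS => _ [x Hx]; have := B x; rewrite tst; lra.
case: tS => t0 [x Hx].
have := He (t - ts) _ _ _ x _.
have -> : ts + (t - ts) = t by rewrite addrC subrK.
have e1 : `|t - ts| < e by rewrite gtr0_norm ?subr_gt0 //; lra.
have e2 : t - ts != 0 by apply: lt0r_neq0; rewrite subr_gt0.
move/(_ e1 e2 t0); rewrite subr_gt0 => /(_ tst); lra.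
Qed.

Definition sol (u : R -> X -> R) :=
  forall t, 0 <= t -> forall x, qd u t x @ FF t --> Q (u t) x.

Lemma comp_sol u v : sol u -> sol v -> (forall x, u 0 x <= v 0 x) ->
  forall t, 0 <= t -> forall x, u t x <= v t x.
Proof.
move=> Hu Hv H0 t t0 x; rewrite -subr_ge0.
apply: (@KL (fun t x => v t x - u t x) (fun t x => Q (v t) x - Q (u t) x)) => //.
- move=> s s0 y.
  have -> : qd (fun t x => v t x - u t x) s y = (fun h => qd v s y h - qd u s y h).
    by apply: funext => h; rewrite /qd; ring.
  exact: cvgB (Hv s s0 y) (Hu s s0 y).
- move=> s s0 y; have := Q_diff (v s) (u s) y; lra.
- move=> y; rewrite subr_ge0; exact: H0.
Qed.

Lemma uniq_sol u v : sol u -> sol v -> (forall x, u 0 x = v 0 x) ->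
  forall t, 0 <= t -> u t = v t.
Proof.
move=> Hu Hv H0 t t0; apply: funext => x; apply/le_anti/andP; split.
  by apply: comp_sol => // y; rewrite H0.
by apply: comp_sol => // y; rewrite H0.
Qed.

Lemma const_sol (mu : R) : sol (fun _ _ => mu).
Proof.
move=> t t0 x.
have -> : qd (fun _ _ => mu) t x = (fun _ => 0) by apply: funext => h; rewrite /qd subrr mulr0.
rewrite Q_cst; exact: cvg_cst.
Qed.

End ODE.
Section Sem.
Variables (R : realType) (X : finType).
Variable Q : (X -> R) -> (X -> R).
Hypothesis HQ : lower_rate_op Q.
Variable T : R -> (X -> R) -> (X -> R).
Hypothesis HT : lower_semigroup Q T.
Implicit Types (f g : X -> R).
Local Notation FF t := (within (fun h : R => 0 <= t + h) (0 : R)^').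

Lemma T_sol f : sol Q (fun s => T s f).
Proof. by move=> t t0 x; have [_ H] := HT f; exact: H. Qed.
Arguments T_sol f : clear implicits.

Lemma T0 f : T 0 f = f.
Proof. by have [H _] := HT f. Qed.

Lemma T_const (mu : R) s : 0 <= s -> T s (fun _ => mu) = (fun _ => mu).
Proof.
move=> s0.
have := @uniq_sol R X Q HQ (fun s => T s (fun _ => mu)) (fun _ _ => mu) (T_sol _) (@const_sol R X Q HQ mu).
by apply => // x; rewrite T0.
Qed.

Lemma T_hom (l : R) f s : 0 <= l -> 0 <= s -> T s (fun y => l * f y) = (fun y => l * T s f y).
Proof.
move=> l0 s0.
apply: (@uniq_sol R X Q HQ (fun s => T s (fun y => l * f y)) (fun s y => l * T s f y)) => //.
- exact: T_sol.
- move=> t t0 x.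
  have -> : qd (fun s y => l * T s f y) t x = (fun h => l * qd (fun s => T s f) t x h).
    by apply: funext => h; rewrite /qd; ring.
  have -> : Q (fun y => l * T t f y) x = l * Q (T t f) x by rewrite (Q_hom HQ).
  apply: cvgM; first exact: cvg_cst.
  exact: T_sol.
- by move=> x; rewrite !T0.
Qed.

Lemma T_shift (r : R) f s : 0 <= r -> 0 <= s -> T (r + s) f = T s (T r f).
Proof.
move=> r0 s0.
apply: (@uniq_sol R X Q HQ (fun s => T (r + s) f) (fun s => T s (T r f))) => //.
- move=> t t0 x.
  have -> : qd (fun s => T (r + s) f) t x = qd (fun s => T s f) (r + t) x.
    by apply: funext => h; rewrite /qd addrA.
  have H := T_sol f (r + t) (addr_ge0 r0 t0) x.
  apply: cvg_trans H; apply: cvg_app; apply: within_subset => h /=; lra.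
- exact: T_sol.
- by move=> x; rewrite addr0 T0.
Qed.

Lemma T_sup f g s x : 0 <= s -> T s f x + T s g x <= T s (fun y => f y + g y) x.
Proof.
move=> s0; rewrite -subr_ge0.
have H : 0 <= T s (fun y : X => f y + g y) x - T s f x - T s g x.
  apply: (@KL R X Q HQ (fun t y => T t (fun y => f y + g y) y - T t f y - T t g y)
    (fun t y => Q (T t (fun y => f y + g y)) y - Q (T t f) y - Q (T t g) y)) => //.
  - move=> t t0 y.
    have -> : qd (fun t y => T t (fun y => f y + g y) y - T t f y - T t g y) t y =
      (fun h => qd (fun t => T t (fun y => f y + g y)) t y h - qd (fun t => T t f) t y h
                 - qd (fun t => T t g) t y h).
      by apply: funext => h; rewrite /qd; ring.
    apply: cvgB; first apply: cvgB; exact: T_sol.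
  - move=> t t0 y.
    have := @Q_diff R X Q HQ (T t (fun y => f y + g y)) (T t f) y.
    have := @Q_diff R X Q HQ (fun y => T t (fun y => f y + g y) y - T t f y) (T t g) y.
    lra.
  - move=> y; rewrite !T0; lra.
lra.
Qed.

Lemma T_ge0 g s : 0 <= s -> (forall x, 0 <= g x) -> forall x, 0 <= T s g x.
Proof.
move=> s0 g0 x.
have := @comp_sol R X Q HQ (fun _ _ => 0) (fun s => T s g) (@const_sol R X Q HQ 0) (T_sol g).
by apply => // y; rewrite T0.
Qed.

Lemma T_mono f g s : 0 <= s -> (forall x, f x <= g x) -> forall x, T s f x <= T s g x.
Proof.
move=> s0 fg x.
have -> : g = (fun y => f y + (g y - f y)) by apply: funext => y; rewrite addrC subrK.
have := T_sup f (fun y => g y - f y) x s0.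
have := T_ge0 (g := fun y => g y - f y) s0 _ x.
have H : forall y, 0 <= g y - f y by move=> y; rewrite subr_ge0.
move/(_ H); lra.
Qed.

Lemma T_isLT s : 0 <= s -> isLT (T s).
Proof.
move=> s0; split.
- by move=> f g x; exact: T_sup.
- by move=> l f l0; exact: T_hom.
- by move=> mu; exact: T_const.
- by move=> f g fg x; exact: T_mono.
Qed.

Lemma T_iter (t : R) n f : 0 <= t -> iter n (T t) f = T (n%:R * t) f.
Proof.
move=> t0; elim: n => [|n IH]; first by rewrite mul0r T0.
rewrite iterS IH -T_shift //; last by apply: mulr_ge0.
by rewrite -natr1 mulrDl mul1r.
Qed.

End Sem.

Lemma lin_to_oo (R : realType) (t : R) : 0 < t -> (n%:R * t) @[n --> \oo] --> +oo.
Proof.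
move=> t0; apply/cvgryPge => A.
apply: filterS (nbhs_infty_ger (A / t)) => n Hn.
by rewrite -ler_pdivrMr.
Qed.

Section Main.
Variables (R : realType) (X : finType).
Variable Q : (X -> R) -> (X -> R).
Hypothesis HQ : lower_rate_op Q.
Variable T : R -> (X -> R) -> (X -> R).
Hypothesis HT : lower_semigroup Q T.
Variable t : R.
Hypothesis t0 : 0 < t.

Lemma erg_to_RA : (0 < #|X|)%N -> ergodic T -> regularly_absorbing (T t).
Proof.
move=> Xne HE.
have HS := T_isLT HQ HT (ltW t0).
apply: nec_RA HS Xne _ => g.
have [c Hc] := HE g; exists c => x.
have -> : (fun n => iter n (T t) g x) = (fun n => T (n%:R * t) g x).
  by apply: funext => n; rewrite (T_iter HQ HT _ _ (ltW t0)).
have := (cvg_pinftyP (fun s => T s g x) c).1 (Hc x) _ (lin_to_oo t0).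
by [].
Qed.

Lemma persist f (s1 s : R) (a b : R) : 0 <= s1 -> s1 <= s ->
  (forall x, a <= T s1 f x <= b) -> forall x, a <= T s f x <= b.
Proof.
move=> s10 s1s H x.
have ds : 0 <= s - s1 by rewrite subr_ge0.
have -> : s = s1 + (s - s1) by rewrite addrC subrK.
rewrite (T_shift HQ HT _ s10 ds).
case: (T_isLT HQ HT ds) => _ _ Hc Hm.
apply/andP; split.
  have := Hm (fun _ => a) (T s1 f) _ x; rewrite Hc; apply => y; by case/andP: (H y).
have := Hm (T s1 f) (fun _ => b) _ x; rewrite Hc; apply => y; by case/andP: (H y).
Qed.

Lemma RA_to_erg : regularly_absorbing (T t) -> ergodic T.
Proof.
move=> HRA f.
have HS := T_isLT HQ HT (ltW t0).
have [[x0 _] _] := HRA.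
have [M [e [e0 [e1 Hc]]]] := suff_contract HS HRA.
set B := \sum_z `|f z|.
have HB : forall x, - B <= f x <= B.
  move=> x; rewrite -ler_norml /B (bigD1 x) //= lerDl; exact: sumr_ge0.
have Hk : forall k : nat, exists a b : R, b - a <= (1 - e) ^+ k * (B - - B) /\
    forall x, a <= iter (k * M) (T t) f x <= b.
  elim => [|k [a [b [Hab Hx]]]].
    exists (- B), B; split; first by rewrite expr0 mul1r.
    by move=> x; rewrite mul0n /=; exact: HB.
  have [a' [b' [_ [_ [Hw Hx']]]]] := Hc _ _ _ Hx.
  exists a', b'; split.
    apply: le_trans Hw _; rewrite exprS -mulrA; apply: ler_wpM2l => //; lra.
  by move=> x; rewrite mulSn iterD; exact: Hx'.
have Hk' : forall k : nat, exists a b : R, b - a <= (1 - e) ^+ k * (B - - B) /\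
    forall s, (k * M)%:R * t <= s -> forall x, a <= T s f x <= b.
  move=> k; have [a [b [Hab Hx]]] := Hk k; exists a, b; split => // s Hs.
  have sk0 : 0 <= (k * M)%:R * t by apply: mulr_ge0 => //; exact: ltW.
  apply: persist sk0 Hs _ => x.
  by rewrite -(T_iter HQ HT _ _ (ltW t0)).
pose L := [set a : R | exists s, 0 <= s /\ forall x, a <= T s f x].
have L0 : L (- B) by exists 0; split => // x; rewrite (T0 HT) //; by case/andP: (HB x).
have Lub : forall a, L a -> a <= B.
  move=> a [s [s0 Ha]]; apply: le_trans (Ha x0) _.
  have H1 : forall y, - B <= T 0 f y <= B by move=> y; rewrite (T0 HT); exact: HB.
  by case/andP: (persist (lexx 0) s0 H1 x0).
have hsup : has_sup L by split; [exists (- B) | exists B => a; exact: Lub].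
set c := sup L.
exists c => x.
apply/cvgrPdist_lt => eps eps0.
have hW : 0 <= B - - B by have := HB x0; lra.
have Hpow : ((1 - e) ^+ k * (B - - B)) @[k --> \oo] --> 0.
  rewrite -(mul0r (B - - B)); apply: cvgMl; apply: cvg_expr.
  rewrite ger0_norm; lra.
have [k Hkk] := filter_ex (cvgr_lt 0 Hpow eps eps0).
have [a [b [Hab Hs]]] := Hk' k.
have ac : a <= c.
  apply: sup_upper_bound => //; exists ((k * M)%:R * t); split.
    by apply: mulr_ge0 => //; exact: ltW.
  by move=> y; case/andP: (Hs _ (lexx _) y).
have cb : c <= b.
  apply: ge_sup; first by exists (- B).
  move=> a1 [s [s0 Ha1]].
  set s' := Num.max s ((k * M)%:R * t).
  have s's : s <= s' by rewrite le_max lexx.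
  have s'k : (k * M)%:R * t <= s' by rewrite le_max lexx orbT.
  have H2 : forall y, a1 <= T s f y <= B.
    move=> y; rewrite Ha1 /=.
    have H1 : forall y, - B <= T 0 f y <= B by move=> z; rewrite (T0 HT); exact: HB.
    by case/andP: (persist (lexx 0) s0 H1 y).
  case/andP: (persist s0 s's H2 x0) => h1 _.
  case/andP: (Hs s' s'k x0) => _ h2.
  exact: le_trans h1 h2.
have kr : (k * M)%:R * t \is Num.real by exact: num_real.
apply: filterS (nbhs_pinfty_ge kr) => s Hs'.
case/andP: (Hs s Hs' x) => h1 h2.
rewrite ltr_norml; apply/andP; split; lra.
Qed.

Lemma main_equiv : (0 < #|X|)%N -> (ergodic T <-> regularly_absorbing (T t)).
Proof. move=> Xne; split; [exact: erg_to_RA | exact: RA_to_erg]. Qed.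
End Main.

Theorem corollary1 (R : realType) (X : finType)
    (Q : (X -> R) -> (X -> R)) (T : R -> (X -> R) -> (X -> R)) :
  (0 < #|X|)%N ->
  lower_rate_op Q ->
  lower_semigroup Q T ->
  forall t : R, 0 < t -> (ergodic T <-> regularly_absorbing (T t)).
Proof.
move=> Xne HQ HT t t0; exact: (main_equiv HQ HT t0 Xne).
Qed.
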